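(* Let $T_M>0$ and $c>0$. Let $f\in C^2(\mathbb R_+)\cap C_b(\mathbb R_+)$ be a solution of $$f''(y)-cf'(y)-f^4(y)=-\int_0^\infty E(y-\eta)f^4(\eta)\,d\eta\ (y>0),\qquad f(0)=T_M,\qquad f\ge 0,$$ with $|f|\le T_M$. Then $f(y)<T_M$ for all $y>0$ and $\partial_yf(0^+)<0$.
   Context: $E(x)=\frac12\int_{|x|}^\infty\frac{e^{-t}}{t}dt$; $\mathbb R_+=[0,\infty)$; $C_b$ denotes bounded continuous functions. *)

(* Defs.v *)
From HB Require Import structures.
From mathcomp Require Import all_boot all_order all_algebra.
From mathcomp Require Import all_classical all_reals all_analysis.
Set Implicit Arguments. Unset Strict Implicit. Unset Printing Implicit Defensive.
Import Order.TTheory GRing.Theory Num.Theory.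
Import numFieldNormedType.Exports.
Local Open Scope classical_set_scope.
Local Open Scope ring_scope.

(* E(x) = 1/2 \int_{|x|}^\infty e^{-t}/t dt  (Lebesgue integral; at x = 0 the
   integral is +oo and [fine] returns 0, irrelevant since {0} is null). *)
Definition Ekernel (R : realType) (x : R) : R :=
  2^-1 * fine (\int[@lebesgue_measure R]_(t in `]`|x|, +oo[) (expR (- t) / t)%:E).

Definition Eterm (R : realType) (f : R -> R) (y : R) : \bar R :=
  \int[@lebesgue_measure R]_(eta in `[0, +oo[) (Ekernel (y - eta) * f eta ^+ 4)%:E.

(* Main.v *)
Require Import Defs.
From HB Require Import structures.
From mathcomp Require Import all_boot all_order all_algebra.
From mathcomp Require Import all_classical all_reals all_analysis.
From mathcomp Require Import measurable_realfun.
From mathcomp Require Import lra.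
Import Order.TTheory GRing.Theory Num.Theory.
Import numFieldNormedType.Exports.
Local Open Scope classical_set_scope.
Local Open Scope ring_scope.

Section E1sec.
Context {R : realType}.
Notation mu := (@lebesgue_measure R).

Definition gE (t : R) : R := expR (- t) / t.
Definition E1 (x : R) : R := fine (\int[mu]_(t in `]x, +oo[) (gE t)%:E).

Lemma der1E (F : R -> R) (x d : R) : is_derive x 1 F d -> derive1 F x = d.
Proof. by move=> H; rewrite derive1E; exact: derive_val. Qed.

Lemma der_cont {F : R -> R} {x : R} : derivable F x 1 -> {for x, continuous F}.
Proof. by move=> /derivable1_diffP/differentiable_continuous. Qed.

Lemma is_derive_expN (t : R) : is_derive t 1 (fun t : R => expR (- t)) (- expR (- t)).
Proof.
have := @is_derive1_comp R expR (fun t => - t) t (expR (- t)) (-1).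
rewrite mulrN1; apply; exact: is_deriveNid.
Qed.

Lemma derivable_gE {t : R} : t != 0 -> derivable gE t 1.
Proof.
move=> t0; apply: (@derivableM R R (fun t => expR (- t)) (fun t => t^-1)).
  by case: (is_derive_expN t).
by apply: derivableV => //; exact: derivable_id.
Qed.

Lemma cont_gE {t : R} : t != 0 -> {for t, continuous gE}.
Proof. by move=> t0; apply: der_cont; exact: derivable_gE. Qed.

Lemma gE_ge0 {t : R} : 0 <= t -> 0 <= gE t.
Proof. by move=> t0; rewrite /gE divr_ge0// expR_ge0. Qed.

Lemma int_expN (x : R) :
  (\int[mu]_(t in `[x, +oo[) (expR (- t))%:E = (expR (- x))%:E)%E.
Proof.
have := @ge0_continuous_FTC2y R (fun t => expR (- t)) (fun t => - expR (- t)) x 0.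
rewrite EFinN sub0e oppeK; apply.
- by move=> t _; exact: expR_ge0.
- apply: derivable_within_continuous => t _.
  by case: (is_derive_expN t).
- by rewrite -oppr0; apply: cvgN; exact: cvgr_expR.
- move=> t _; apply: derivableN.
  by case: (is_derive_expN t).
- apply: cvg_at_right_filter.
  apply: (@der_cont (fun t => - expR (- t))); apply: derivableN; by case: (is_derive_expN x).
- move=> t _; apply: der1E.
  rewrite -[X in is_derive _ _ _ X]opprK.
  by apply: is_deriveN; exact: is_derive_expN.
Qed.


Lemma meas_expN (D : set R) : measurable D ->
  measurable_fun D (fun t : R => (expR (- t))%:E).
Proof.
move=> mD; apply/measurable_EFinP; apply: measurable_funS (continuous_measurable_fun _) => //.
move=> t; apply: der_cont; by case: (is_derive_expN t).
Qed.

Lemma meas_gE {x : R} : 0 <= x -> measurable_fun `]x, +oo[ (fun t => (gE t)%:E).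
Proof.
move=> x0; apply/measurable_EFinP; apply: open_continuous_measurable_fun.
  exact: interval_open.
move=> t; rewrite inE/= in_itv/= andbT => xt; apply: cont_gE.
by rewrite gt_eqF // (le_lt_trans x0 xt).
Qed.

Lemma int_gE_le (x : R) : 0 < x ->
  (\int[mu]_(t in `]x, +oo[) (gE t)%:E <= (expR (- x) / x)%:E)%E.
Proof.
move=> x0.
apply: (@le_trans _ _ (\int[mu]_(t in `]x, +oo[) ((x^-1)%:E * (expR (- t))%:E))%E).
  apply: ge0_le_integral => //.
  - move=> t; rewrite /= in_itv/= andbT => xt.
    by rewrite lee_fin gE_ge0 // ltW // (lt_trans x0 xt).
  - exact: meas_gE (ltW x0).
  - by apply: measurable_funeM; exact: meas_expN.
  - move=> t; rewrite /= in_itv/= andbT => xt.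
    rewrite lee_fin /gE mulrC; apply: ler_wpM2r; first exact: expR_ge0.
    by rewrite lef_pV2 ?posrE ?ltW// (lt_trans x0 xt).
rewrite (@ge0_integralZl_EFin _ (measurableTypeR R) R mu) //.
all: try (by rewrite invr_ge0 ltW).
all: try (by apply: meas_expN).
rewrite (@integral_itv_obnd_cbnd R x +oo%O); last by apply: meas_expN.
by rewrite int_expN -EFinM mulrC.
Qed.

Lemma int_gE_ge0 {x : R} : 0 <= x ->
  (0 <= \int[mu]_(t in `]x, +oo[) (gE t)%:E)%E.
Proof.
move=> x0; apply: integral_ge0 => t; rewrite /= in_itv/= andbT => xt.
by rewrite lee_fin gE_ge0 // ltW // (le_lt_trans x0 xt).
Qed.

Lemma int_gE_fin {x : R} : 0 < x ->
  (\int[mu]_(t in `]x, +oo[) (gE t)%:E)%E \is a fin_num.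
Proof.
move=> x0; rewrite ge0_fin_numE; last exact: int_gE_ge0 (ltW x0).
apply: (le_lt_trans (@int_gE_le x x0)); exact: ltry.
Qed.

Lemma E1E {x : R} : 0 < x ->
  (E1 x)%:E = (\int[mu]_(t in `]x, +oo[) (gE t)%:E)%E.
Proof. by move=> x0; rewrite /E1 fineK // int_gE_fin. Qed.

Lemma E1_ge0 {x : R} : 0 <= x -> 0 <= E1 x.
Proof. by move=> x0; apply: fine_ge0; exact: int_gE_ge0. Qed.

Lemma E1_le {x : R} : 0 < x -> x * E1 x <= expR (- x).
Proof.
move=> x0; rewrite mulrC -ler_pdivlMr //.
by rewrite -lee_fin E1E //; exact: int_gE_le.
Qed.


Lemma int_gE_oc_fin (a b : R) : 0 < a ->
  (\int[mu]_(t in `]a, b]) (gE t)%:E)%E \is a fin_num.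
Proof.
move=> a0; rewrite ge0_fin_numE; last first.
  apply: integral_ge0 => t; rewrite /= in_itv/= => /andP[at_ _].
  by rewrite lee_fin gE_ge0 // ltW // (lt_trans a0 at_).
apply: (@le_lt_trans _ _ (\int[mu]_(t in `]a, +oo[) (gE t)%:E)%E); last first.
  rewrite -ge0_fin_numE; [exact: int_gE_fin|exact: int_gE_ge0 (ltW a0)].
apply: ge0_subset_integral => //.
- exact: meas_gE (ltW a0).
- move=> t; rewrite /= in_itv/= andbT => at_.
  by rewrite lee_fin gE_ge0 // ltW // (lt_trans a0 at_).
- by move=> t; rewrite /= !in_itv/= andbT => /andP[].
Qed.

Lemma E1_split (a z : R) : 0 < a -> a < z ->
  E1 a = (\int[mu]_(t in `]a, z]) (gE t))%R + E1 z.
Proof.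
move=> a0 az; apply/EFin_inj; rewrite EFinD E1E // E1E ?(lt_trans a0 az) //.
rewrite /Rintegral fineK; last exact: int_gE_oc_fin.
rewrite (@itv_bndbnd_setU _ _ (BRight a) (BRight z) +oo%O); last 2 first.
- by rewrite bnd_simp; exact: ltW.
- by [].
rewrite ge0_integral_setU //.
- rewrite -(@itv_bndbnd_setU _ _ (BRight a) (BRight z) +oo%O) //; last by rewrite bnd_simp; exact: ltW.
  exact: meas_gE (ltW a0).
- move=> t; rewrite -(@itv_bndbnd_setU _ _ (BRight a) (BRight z) +oo%O) //; last by rewrite bnd_simp; exact: ltW.
  rewrite /= in_itv/= andbT => at_.
  by rewrite lee_fin gE_ge0 // ltW // (lt_trans a0 at_).
- rewrite disj_set2E; apply/eqP; apply/seteqP; split => t //=.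
  rewrite !in_itv/= andbT => -[/andP[_ tz] zt].
  by move: (le_lt_trans tz zt); rewrite ltxx.
Qed.

Lemma is_derive_E1 {x : R} : 0 < x -> is_derive x 1 E1 (- gE x).
Proof.
move=> x0.
set x1 := x / 2.
have x10 : 0 < x1 by rewrite divr_gt0.
have x1x : x1 < x by rewrite /x1 ltr_pdivrMr // ltr_pMr // ltr1n.
pose P z := (\int[mu]_(t in [set` Interval (BRight x1) (BRight z)]) (gE t))%R.
have intP : mu.-integrable [set` Interval (BRight x1) (BRight (2 * x))] (EFin \o gE).
  apply: (@integrableS _ _ _ mu `[x1, 2 * x]) => //.
    by move=> t; rewrite /= !in_itv/= => /andP[/ltW -> ->].
  apply: continuous_compact_integrable; first exact: segment_compact.
  apply: derivable_within_continuous => t; rewrite in_itv/= => /andP[x1t _].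
  by apply: derivable_gE; rewrite gt_eqF // (lt_le_trans x10 x1t).
have := @continuous_FTC1 R gE (BRight x1) x (2 * x) _ intP.
case.
- by rewrite ltr_pMl // ltr1n.
- by [] || exact: x1x || (simpl; exact: x1x).
- by apply: cont_gE; rewrite gt_eqF.
move=> dP P'.
have isP : is_derive x 1 P (gE x).
  by rewrite -P' derive1E; exact: derivableP.
have isF : is_derive x 1 (fun z => E1 x1 - P z) (- gE x).
  rewrite -[X in is_derive _ _ _ X]sub0r.
  exact: (@is_deriveB _ _ _ (cst (E1 x1)) P).
apply: (near_eq_is_derive _ isF).
near=> z.
have x1z : x1 < z by near: z; exact: lt_nbhsr.
by rewrite (@E1_split x1 z x10 x1z) addrAC subrr add0r.
Unshelve. all: by end_near. Qed.


Lemma derivable_E1 {x : R} : 0 < x -> derivable E1 x 1.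
Proof. by move=> x0; case: (is_derive_E1 x0). Qed.

Lemma E1_decr {x y : R} : 0 < x -> x < y -> E1 y < E1 x.
Proof.
move=> x0 xy.
have H1 : forall t, t \in `]x, y[ -> is_derive t 1 E1 (- gE t).
  move=> t; rewrite in_itv/= => /andP[xt _]; apply: is_derive_E1.
  exact: lt_trans x0 xt.
have H2 : {within `[x, y], continuous E1}.
  apply: derivable_within_continuous => t; rewrite in_itv/= => /andP[xt _].
  by apply: derivable_E1; exact: lt_le_trans x0 xt.
rewrite -subr_lt0; have [c cxy ->] := MVT xy H1 H2.
move: cxy; rewrite in_itv/= => /andP[xc _].
have c0 : 0 < c by exact: lt_trans x0 xc.
by rewrite pmulr_llt0 ?subr_gt0 // /gE oppr_lt0 divr_gt0 // expR_gt0.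
Qed.

Lemma E1_gt0 {x : R} : 0 < x -> 0 < E1 x.
Proof.
move=> x0; apply: (le_lt_trans (E1_ge0 (ltW (ltr_wpDr ler01 x0)))).
by apply: E1_decr => //; rewrite ltrDl ltr01.
Qed.

Definition Fx (t : R) : R := t * E1 t - expR (- t).

Lemma is_derive_Fx {t : R} : 0 < t -> is_derive t 1 Fx (E1 t).
Proof.
move=> t0.
have h1 : is_derive t 1 (fun s : R => s * E1 s) (t * (- gE t) + E1 t).
  have := @is_deriveM R R id E1 t 1 1 (- gE t) (is_derive_id t 1) (is_derive_E1 t0).
  by rewrite /GRing.scale/= mulr1.
have h2 := @is_deriveB R R R (fun s : R => s * E1 s) (fun s => expR (- s)) t 1 _ _ h1 (is_derive_expN t).
have -> : Fx = (fun s : R => s * E1 s) - (fun s => expR (- s)) by apply/funext.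
eapply is_derive_eq; [exact: h2|].
rewrite /gE mulrN mulrC divfK ?gt_eqF //.
by rewrite addrAC subrr add0r.
Qed.

Lemma Fx_le0 {t : R} : 0 < t -> Fx t <= 0.
Proof. by move=> t0; rewrite /Fx subr_le0 E1_le. Qed.

Lemma Fx_ge {t : R} : 0 <= t -> - expR (- t) <= Fx t.
Proof.
by move=> t0; rewrite /Fx -[X in X <= _]add0r lerD2r mulr_ge0 // E1_ge0.
Qed.

Lemma Fx_bound {y : R} : 0 < y -> Fx y <= - E1 (y + 1).
Proof.
move=> y0.
have yy1 : y < y + 1 by rewrite ltrDl ltr01.
have H1 : forall t, t \in `]y, y + 1[ -> is_derive t 1 Fx (E1 t).
  move=> t; rewrite in_itv/= => /andP[yt _]; apply: is_derive_Fx.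
  exact: lt_trans y0 yt.
have H2 : {within `[y, y + 1], continuous Fx}.
  apply: derivable_within_continuous => t; rewrite in_itv/= => /andP[yt _].
  by case: (@is_derive_Fx t (lt_le_trans y0 yt)).
have [c cyy] := MVT yy1 H1 H2.
have e1y : y + 1 - y = 1 by rewrite addrAC subrr add0r.
rewrite e1y mulr1 => eq1.
move: cyy; rewrite in_itv/= => /andP[yc cy1].
have : E1 (y + 1) <= E1 c by apply/ltW/E1_decr => //; exact: lt_trans y0 yc.
have : Fx (y + 1) <= 0 by apply: Fx_le0; exact: lt_trans y0 yy1.
move: eq1; set a := Fx (y + 1); set b := Fx y; set e := E1 c; set e1 := E1 (y + 1).
move=> eq1 ha he.
have -> : b = a - e by rewrite -eq1 opprB addrC subrK.
by have := lerB ha he; rewrite sub0r.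
Qed.

End E1sec.


Section Bsec.
Context {R : realType}.
Notation mu := (@lebesgue_measure R).

Lemma Ekernel_E1 (x : R) : Ekernel x = 2^-1 * E1 `|x|.
Proof. by []. Qed.

Lemma Ekernel_ge0 (x : R) : 0 <= Ekernel x.
Proof. by rewrite Ekernel_E1 mulr_ge0 // ?invr_ge0 ?ler0n // E1_ge0. Qed.

Lemma is_derive_Fxl (y s0 : R) : s0 < y ->
  is_derive s0 1 (fun s => - (2^-1 * Fx (y - s))) (2^-1 * E1 (y - s0)).
Proof.
move=> sy.
have hg : is_derive s0 1 (fun s : R => y - s) (-1).
  have := @is_deriveB R R R (cst y) id s0 1 0 1 (is_derive_cst y s0 1) (is_derive_id s0 1).
  by rewrite sub0r.
have hc := @is_derive1_comp R Fx (fun s => y - s) s0 (E1 (y - s0)) (-1)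
  (is_derive_Fx (t:=y-s0) ltac:(by rewrite subr_gt0)) hg.
have hz := @is_deriveZ R R R (Fx \o (fun s => y - s)) (- 2^-1) s0 1 _ hc.
have -> : (fun s => - (2^-1 * Fx (y - s))) = (- 2^-1) \*: (Fx \o (fun s => y - s)).
  by apply/funext => s /=; rewrite /GRing.scale/= mulNr.
eapply is_derive_eq; [exact: hz|].
by rewrite /GRing.scale/= mulrN1 mulrNN.
Qed.

Lemma is_derive_Fxr (y s0 : R) : y < s0 ->
  is_derive s0 1 (fun s => 2^-1 * Fx (s - y)) (2^-1 * E1 (s0 - y)).
Proof.
move=> sy.
have hg : is_derive s0 1 (fun s : R => s - y) 1.
  have := @is_deriveB R R R id (cst y) s0 1 1 0 (is_derive_id s0 1) (is_derive_cst y s0 1).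
  by rewrite subr0.
have hc := @is_derive1_comp R Fx (fun s => s - y) s0 (E1 (s0 - y)) 1
  (is_derive_Fx (t:=s0-y) ltac:(by rewrite subr_gt0)) hg.
have hz := @is_deriveZ R R R (Fx \o (fun s => s - y)) (2^-1) s0 1 _ hc.
have -> : (fun s => 2^-1 * Fx (s - y)) = (2^-1) \*: (Fx \o (fun s => s - y)).
  by apply/funext => s /=.
eapply is_derive_eq; [exact: hz|].
by rewrite /GRing.scale/= mulr1.
Qed.


Lemma openNy (y : R) : open [set~ y].
Proof. rewrite openC; apply: compact_closed; [exact: Rhausdorff | exact: compact_set1]. Qed.

Lemma contZE1 (g : R -> R) (s : R) : {for s, continuous g} -> 0 < g s ->
  {for s, continuous (fun s => 2^-1 * E1 (g s))}.
Proof.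
move=> cg gs.
have h2 : {for s, continuous (fun s => E1 (g s))}.
  have H := @continuous_comp _ _ _ g E1 s cg (der_cont (derivable_E1 gs)).
  exact: H.
apply: (@continuous_comp _ _ _ (fun s => E1 (g s)) (fun u : R => 2^-1 * u) s h2).
apply: der_cont.
have := @is_deriveZ R R R (@id R) (2^-1) (E1 (g s)) 1 1 (@is_derive_id R R (E1 (g s)) 1).
by case.
Qed.

Lemma cont_sub (y s : R) : {for s, continuous (fun s : R => y - s)}.
Proof.
apply: der_cont.
have := @is_deriveB R R R (cst y) id s 1 0 1 (is_derive_cst y s 1) (is_derive_id s 1).
by case.
Qed.

Lemma cont_subr (y s : R) : {for s, continuous (fun s : R => s - y)}.
Proof.
apply: der_cont.
have := @is_deriveB R R R id (cst y) s 1 1 0 (is_derive_id s 1) (is_derive_cst y s 1).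
by case.
Qed.

Lemma cont_Ek (y s : R) : s != y -> {for s, continuous (fun s => Ekernel (y - s))}.
Proof.
move=> sy; apply: (@contZE1 (fun s => `|y - s|)).
  exact: (@continuous_comp _ _ _ (fun s => y - s) Num.norm s (cont_sub y s) (@norm_continuous _ R _)).
by rewrite normr_gt0 subr_eq0 eq_sym.
Qed.

Lemma meas_Ek (y : R) : measurable_fun [set~ y] (fun s => (Ekernel (y - s))%:E).
Proof.
apply/measurable_EFinP; apply: open_continuous_measurable_fun; first exact: openNy.
by move=> s; rewrite inE/= => sy; apply: cont_Ek; exact/eqP.
Qed.


Lemma int_low (y b : R) : 0 < b -> b < y ->
  (\int[mu]_(s in `[0%R, b]) (Ekernel (y - s))%:E =
   (2^-1 * Fx y - 2^-1 * Fx (y - b))%:E)%E.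
Proof.
move=> b0 by_.
transitivity (\int[mu]_(s in `[0%R, b]) (2^-1 * E1 (y - s))%:E)%E.
  apply: eq_integral => s; rewrite inE/= in_itv/= => /andP[_ sb].
  by rewrite Ekernel_E1 ger0_norm // subr_ge0 ltW // (le_lt_trans sb by_).
have dF : forall s, s < y -> is_derive s 1 (fun s => - (2^-1 * Fx (y - s))) (2^-1 * E1 (y - s)).
  by move=> s sy; exact: is_derive_Fxl.
rewrite (@continuous_FTC2 R (fun s => 2^-1 * E1 (y - s)) (fun s => - (2^-1 * Fx (y - s))) 0 b b0).
- by rewrite -EFinB subr0 opprK addrC.
- apply: continuous_in_subspaceT => s; rewrite inE/= in_itv/= => /andP[_ sb].
  apply: (@contZE1 (fun s => y - s)); first exact: cont_sub.
  by rewrite subr_gt0 (le_lt_trans sb by_).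
- split.
  + move=> s; rewrite in_itv/= => /andP[_ sb].
    by case: (dF s (lt_trans sb by_)).
  + apply: cvg_at_right_filter.
    case: (dF 0 (lt_trans b0 by_)) => H _; have := der_cont H; apply.
  + apply: cvg_at_left_filter.
    case: (dF b by_) => H _; have := der_cont H; apply.
- move=> s; rewrite in_itv/= => /andP[_ sb].
  exact/der1E/dF/(lt_trans sb by_).
Qed.

Lemma int_up (y a : R) : y < a ->
  (\int[mu]_(s in `[a, +oo[) (Ekernel (y - s))%:E =
   (- (2^-1 * Fx (a - y)))%:E)%E.
Proof.
move=> ya.
transitivity (\int[mu]_(s in `[a, +oo[) (2^-1 * E1 (s - y))%:E)%E.
  apply: eq_integral => s; rewrite inE/= in_itv/= andbT => as_.
  by rewrite Ekernel_E1 distrC ger0_norm // subr_ge0 ltW // (lt_le_trans ya as_).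
have dF : forall s, y < s -> is_derive s 1 (fun s => 2^-1 * Fx (s - y)) (2^-1 * E1 (s - y)).
  by move=> s sy; exact: is_derive_Fxr.
rewrite (@ge0_continuous_FTC2y R (fun s => 2^-1 * E1 (s - y)) (fun s => 2^-1 * Fx (s - y)) a 0).
- by rewrite -EFinB sub0r.
- move=> s as_; rewrite mulr_ge0 // ?invr_ge0 ?ler0n // E1_ge0 // subr_ge0.
  exact: ltW (lt_le_trans ya as_).
- apply: continuous_in_subspaceT => s; rewrite inE/= in_itv/= andbT => as_.
  apply: (@contZE1 (fun s => s - y)); first exact: cont_subr.
  by rewrite subr_gt0 (lt_le_trans ya as_).
- have low : (- (2^-1 * expR (- (s - y)))) @[s --> +oo] --> (0 : R).
    have e : (fun s => - (2^-1 * expR (- (s - y)))) = (fun s => - (2^-1 * (expR (- s) * expR y))).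
      by apply/funext => s; rewrite opprB addrC expRD.
    rewrite e -oppr0; apply: cvgN.
    rewrite -(mulr0 (2^-1 : R)); apply: cvgMl_tmp.
    rewrite -(mul0r (expR y)); apply: cvgMr_tmp.
    exact: cvgr_expR.
  apply: (squeeze_cvgr _ low (cvg_cst 0)).
  near=> s.
  have ys : y < s by near: s; apply: nbhs_pinfty_gt; exact: num_real.
  apply/andP; split.
    rewrite -mulrN ler_wpM2l ?invr_ge0 ?ler0n //.
    by apply: Fx_ge; rewrite subr_ge0 ltW.
  by rewrite mulr_ge0_le0 ?invr_ge0 ?ler0n // Fx_le0 // subr_gt0.
- move=> s as_; by case: (dF s (lt_trans ya as_)).
- apply: cvg_at_right_filter.
  case: (dF a ya) => H _; have := der_cont H; apply.
- move=> s; rewrite in_itv/= andbT => as_.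
  exact/der1E/dF/(lt_trans ya as_).
Unshelve. all: by end_near. Qed.

End Bsec.


Section Csec.
Context {R : realType}.
Notation mu := (@lebesgue_measure R).

Lemma int_Ek_le (y : R) : 0 < y ->
  (\int[mu]_(s in `[0%R, +oo[ `\ y) (Ekernel (y - s))%:E <= (1 + 2^-1 * Fx y)%:E)%E.
Proof.
move=> y0.
pose d (n : nat) : R := y / (n.+2)%:R.
have d0 n : 0 < d n by rewrite divr_gt0 // ltr0n.
have dy n : d n < y by rewrite /d ltr_pdivrMr ?ltr0n // ltr_pMr // ltr1n.
have dle n m : (n <= m)%N -> d m <= d n.
  move=> nm; rewrite /d ler_wpM2l ?(ltW y0) // lef_pV2 ?posrE ?ltr0n // ler_nat.
  by rewrite ltnS ltnS.
pose S n := `[0%R, y - d n] `|` `[y + d n, +oo[.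
have mS n : measurable (S n) by apply: measurableU.
have Ssub n : S n `<=` [set~ y].
  move=> s [] /=; rewrite in_itv/= ?andbT.
    move=> /andP[_ sy] sy'; move: sy; rewrite sy'; have := d0 n; lra.
  move=> ys sy'; move: ys; rewrite sy'; have := d0 n; lra.
have cup : \bigcup_n S n = `[0%R, +oo[ `\ y.
  apply/seteqP; split.
    move=> s [n _ Sns]; split; last exact: Ssub Sns.
    move: Sns => [] /=; rewrite !in_itv/= ?andbT.
      by case/andP.
    move=> ys; have := d0 n; lra.
  move=> s [] /=; rewrite in_itv/= andbT => s0 sy.
  have r0 : 0 < `|s - y| by rewrite normr_gt0 subr_eq0; exact/eqP.
  set n := Num.Def.archi_bound (y / `|s - y|).
  have hn : y / `|s - y| < n%:R by apply: archi_boundP; rewrite divr_ge0 // ltW.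
  have hd : d n <= `|s - y|.
    rewrite /d ler_pdivrMr ?ltr0n // -ler_pdivrMl //.
    rewrite mulrC; apply: (le_trans (ltW hn)); rewrite ler_nat; exact: (leq_trans (leqnSn n) (leqnSn _)).
  exists n => //.
  have [ltsy|ltys] := ltP s y.
    left; rewrite /= in_itv/= s0 /=.
    by move: hd; rewrite ltr0_norm ?subr_lt0 //; lra.
  right; rewrite /= in_itv/= andbT.
  by move: hd; rewrite ger0_norm ?subr_ge0 //; lra.
have ndS : {homo S : n m / (n <= m)%N >-> (n <= m)%O}.
  move=> n m nm; rewrite subsetEset => s [] /=; rewrite !in_itv/= ?andbT.
    move=> /andP[s0 sd]; left; rewrite /= in_itv/= s0 /=.
    by have := dle _ _ nm; lra.
  move=> sd; right; rewrite /= in_itv/= andbT.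
  by have := dle _ _ nm; lra.
have mf n : measurable_fun (S n) (fun s => (Ekernel (y - s))%:E).
  apply: measurable_funS (meas_Ek y) => //.
  exact: open_measurable (openNy y).
have f0 n s : S n s -> (0 <= (Ekernel (y - s))%:E)%E.
  by move=> _; rewrite lee_fin Ekernel_ge0.
have hc := @ge0_nondecreasing_set_cvg_integral _ (measurableTypeR R) R S (fun s => (Ekernel (y - s))%:E) mu ndS mS mf f0.
rewrite -cup -(cvg_lim _ hc) //.
apply: lime_le; first by apply/cvg_ex; eexists; exact: hc.
apply: nearW => n.
rewrite ge0_integral_setU //; last 3 first.
- exact: mf.
- by move=> s Ss; exact: f0 Ss.
- rewrite disj_set2E; apply/eqP; apply/seteqP; split => s //=.
  rewrite !in_itv/= andbT => -[/andP[_ h1] h2].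
  by move: (le_trans h2 h1); have := d0 n; lra.
rewrite int_low ?subr_gt0 //; last by have := d0 n; lra.
rewrite int_up; last by have := d0 n; lra.
have e1 : y - (y - d n) = d n by rewrite opprB addrC subrK.
have e2 : y + d n - y = d n by rewrite addrAC subrr add0r.
rewrite e1 e2 -EFinD lee_fin.
have h1 : - expR (- d n) <= Fx (d n) by apply: Fx_ge; exact: ltW.
have h2 : expR (- d n) <= 1 by rewrite expR_le1 oppr_le0 ltW.
lra.
Qed.

End Csec.


Section Dsec.
Context {R : realType}.
Notation mu := (@lebesgue_measure R).

Lemma Eterm_le (TM : R) (f : R -> R) (y : R) : 0 < y ->
  (forall s, 0 < s -> {for s, continuous f}) ->
  (forall s, 0 <= s -> 0 <= f s <= TM) ->
  (Eterm f y <= (TM ^+ 4 * (1 + 2^-1 * Fx y))%:E)%E.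
Proof.
move=> y0 cf fb.
have TM0 : 0 <= TM by have /andP[] := fb 0 (lexx _); exact: le_trans.
set D1 := `[0%R, +oo[ `\ y.
have mD1 : measurable D1 by apply: measurableD.
have D1E : D1 = [set 0%R] `|` (`]0%R, +oo[ `&` [set~ y]).
  apply/seteqP; split => s.
    move=> [] /=; rewrite in_itv/= andbT => s0 sy.
    have [->|s0'] := eqVneq s 0; first by left.
    by right; split => //=; rewrite in_itv/= andbT lt_def s0' s0.
  move=> [->|[]] /=; first by split; [rewrite /= in_itv/= lexx | move=> h; move: y0; rewrite -h ltxx].
  by rewrite in_itv/= andbT => s0 sy; split => //; rewrite /= in_itv/= andbT ltW.
have mh : measurable_fun D1 (fun s => (Ekernel (y - s) * f s ^+ 4)%:E).
  rewrite D1E; apply/measurable_funU => //.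
    by apply: measurableI => //; exact: open_measurable (openNy y).
  split; first exact: measurable_fun_set1.
  apply/measurable_EFinP; apply: open_continuous_measurable_fun.
    by apply: openI; [exact: interval_open | exact: openNy].
  move=> s; rewrite inE/= in_itv/= andbT => -[s0 sy].
  apply: (@continuousM _ _ (fun s => Ekernel (y - s)) (fun s => f s ^+ 4)).
    by apply: cont_Ek; exact/eqP.
  exact: (@continuous_comp _ _ _ f (fun x => x ^+ 4) s (cf s s0) (@exprn_continuous R 4 (f s))).
have mk : measurable_fun D1 (fun s => ((TM ^+ 4)%:E * (Ekernel (y - s))%:E)%E).
  apply: measurable_funeM; apply: measurable_funS (meas_Ek y) => //.
    exact: open_measurable (openNy y).
  by move=> s [].
rewrite /Eterm -(@integral_setD1 _ _ y) //.
apply: (@le_trans _ _ (\int[mu]_(s in D1) ((TM ^+ 4)%:E * (Ekernel (y - s))%:E))%E).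
  apply: ge0_le_integral => //.
  - move=> s [] /=; rewrite in_itv/= andbT => s0 _.
    by rewrite lee_fin mulr_ge0 ?Ekernel_ge0 // exprn_ge0 //; case/andP: (fb s s0).
  - move=> s [] /=; rewrite in_itv/= andbT => s0 _.
    rewrite -EFinM lee_fin mulrC; apply: ler_wpM2r; first exact: Ekernel_ge0.
    case/andP: (fb s s0) => f0 fT.
    by apply: lerXn2r; rewrite ?nnegrE.
rewrite ge0_integralZl_EFin //; first last.
- exact: exprn_ge0.
- by apply: measurable_funS (meas_Ek y) => //; [exact: open_measurable (openNy y)|move=> s []].
- by move=> s _; rewrite lee_fin Ekernel_ge0.
have H4 : (0 <= (TM ^+ 4)%:E)%E by rewrite lee_fin exprn_ge0.
have := lee_wpmul2l H4 (@int_Ek_le R y y0). rewrite -EFinM. apply.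
Qed.

End Dsec.


Section Esec.
Context {R : realType}.

Lemma push (g : R -> R) (a b : R) : a < b -> {within `[a, b], continuous g} ->
  (forall t, a < t -> t < b -> derivable g t 1 /\ 0 < derive1 g t) -> g a < g b.
Proof.
move=> ab cg dg.
have H1 : forall t, t \in `]a, b[ -> is_derive t 1 g (derive1 g t).
  move=> t; rewrite in_itv/= => /andP[at_ tb].
  by rewrite derive1E; apply: derivableP; case: (dg t at_ tb).
rewrite -subr_gt0; have [c cab ->] := MVT ab H1 cg.
move: cab; rewrite in_itv/= => /andP[ac cb].
by rewrite mulr_gt0 ?subr_gt0 //; case: (dg c ac cb).
Qed.

Lemma near_right0 (P : R -> Prop) : (\forall x \near 0^'+, P x) ->
  exists2 e : R, 0 < e & forall t, 0 < t -> t < e -> P t.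
Proof.
move=> /nbhs_ballP [e /= e0 He]; exists e => // t t0 te.
apply: He => //; rewrite /ball/= sub0r normrN gtr0_norm //.
Qed.

End Esec.


Theorem lemma2p4 (R : realType) (TM c : R) (f : R -> R) :
  0 < TM -> 0 < c ->
  (* f in C^2(R_+): C^2 on ]0,+oo[, with f, f', f'' extending continuously to 0 *)
  (forall y, 0 < y -> derivable f y 1 /\ derivable (derive1 f) y 1 /\
                      {for y, continuous (derive1n 2 f)}) ->
  f x @[x --> 0^'+] --> f 0 ->
  cvg ((derive1 f) x @[x --> 0^'+]) ->
  cvg ((derive1n 2 f) x @[x --> 0^'+]) ->
  (* the equation on y > 0 *)
  (forall y, 0 < y ->
     (((derive1n 2 f) y - c * (derive1 f) y - f y ^+ 4)%:E = - Eterm f y)%E) ->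
  f 0 = TM ->
  (forall y, 0 <= y -> 0 <= f y) ->
  (forall y, 0 <= y -> `|f y| <= TM) ->
  (forall y, 0 < y -> f y < TM) /\
  (exists l : R, l < 0 /\ (derive1 f) x @[x --> 0^'+] --> l).
Proof.
move=> TM0 c0 hd h0 hl hm heq hf0 hpos hbd.
have e2 : derive1n 2 f = derive1 (derive1 f) by [].
set f1 := derive1 f in hd hl heq e2 *.
set f2 := derive1n 2 f in hd hm heq e2 *.
have cf : forall s, 0 < s -> {for s, continuous f}.
  by move=> s s0; apply: der_cont; case: (hd s s0).
have fb : forall s, 0 <= s -> 0 <= f s <= TM.
  by move=> s s0; rewrite hpos //= (le_trans (ler_norm _)) // hbd.
set T4 := TM ^+ 4.
have T40 : 0 < T4 by rewrite exprn_gt0.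
have KB : forall y, 0 < y -> c * f1 y + f y ^+ 4 - T4 - 2^-1 * (T4 * Fx y) <= f2 y.
  move=> y y0.
  have := @Eterm_le R TM f y y0 cf fb.
  rewrite -[Eterm f y]oppeK -heq // -EFinN lee_fin.
  rewrite mulrDr mulr1 mulrCA -/T4.
  lra.
have d1 : forall s, 0 < s -> derivable f1 s 1 /\ derive1 f1 s = f2 s.
  by move=> s s0; case: (hd s s0) => _ [d _]; split => //; rewrite e2.
have d0 : forall s, 0 < s -> derivable f s 1 by move=> s s0; case: (hd s s0).
have PF : forall y, 0 < y -> - (T4 * Fx y) >= T4 * E1 (y + 1).
  move=> y y0; rewrite -mulrN; apply: ler_wpM2l; first exact: ltW.
  by have := @Fx_bound R y y0; lra.
have part1 : forall y, 0 < y -> f y < TM.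
  move=> y y0; rewrite ltNge; apply/negP => Hy.
  have fyT : f y = TM.
    by apply/eqP; rewrite eq_le Hy andbT; case/andP: (fb y (ltW y0)).
  have f1y : f1 y = 0.
    apply: der1E; apply: (@derive1_at_max R f 0 (2 * y) y).
    - by rewrite mulr_ge0 // ltW.
    - by move=> t; rewrite in_itv/= => /andP[t0 _]; exact: d0.
    - by rewrite in_itv/= y0 /=; lra.
    - move=> t; rewrite in_itv/= => /andP[t0 _]; rewrite fyT.
      by case/andP: (fb t (ltW t0)).
  have f2y : 0 < f2 y.
    have hE := mulr_gt0 T40 (@E1_gt0 R (y + 1) ltac:(lra)).
    have := KB y y0; rewrite f1y fyT mulr0 add0r -/T4.
    have := PF y y0; lra.
  have [e e0 He] : exists2 e : R, 0 < e & forall t, `|y - t| < e -> 0 < f2 t.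
    case: (hd y y0) => _ [_ cf2].
    have Hn := @cvgr_gt _ _ _ _ f2 (f2 y) cf2 0 f2y.
    have [e e0 He'] := (nbhs_ballP y _).1 (Hn _).
    exists e => // t ht.
  set m := Num.min e y.
  have m1 : m <= e by rewrite /m ge_min lexx.
  have m2 : m <= y by rewrite /m ge_min lexx orbT.
  have m0 : 0 < m by rewrite /m lt_min e0 y0.
  set b := y + m / 2.
  have f1pos : forall t, y < t -> t <= b -> 0 < f1 t.
    move=> t yt tb; rewrite -f1y; apply: push; first exact: yt.
      apply: derivable_within_continuous => s; rewrite in_itv/= => /andP[ys _].
      by case: (d1 s (lt_le_trans y0 ys)).
    move=> s ys st; case: (d1 s (lt_trans y0 ys)) => ds ->; split; first exact: ds.
    apply: He; rewrite distrC ger0_norm; last by rewrite subr_ge0; exact: ltW.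
    rewrite /b in tb; move: ys st tb m1 m0; clear; lra.
  have : f y < f b.
    apply: push; first by rewrite /b; move: m0; clear; lra.
      apply: derivable_within_continuous => s; rewrite in_itv/= => /andP[ys _].
      exact: d0 (lt_le_trans y0 ys).
    move=> s ys sb; split; first exact: d0 (lt_trans y0 ys).
    by apply: f1pos; [exact: ys | exact: ltW].
  have b0 : 0 <= b by rewrite /b; move: m0 y0; clear; lra.
  rewrite fyT; case/andP: (fb b b0) => _ fbT.
  move: fbT; clear; lra.
split; first exact: part1.
have hl' : f1 x @[x --> 0^'+] --> lim (f1 x @[x --> 0^'+]) := hl.
set l := lim (f1 x @[x --> 0^'+]) in hl'.
exists l; split; last exact: hl'.
rewrite ltNge; apply/negP => l0.
set kap := E1 (2 : R).
have kap0 : 0 < kap by apply: E1_gt0; rewrite ltr0n.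
have KB2 : forall y, 0 < y -> y < 1 ->
    c * f1 y + f y ^+ 4 - T4 + 2^-1 * (T4 * kap) <= f2 y.
  move=> y y0 y1.
  have hk : kap <= E1 (y + 1).
    apply/ltW/E1_decr; first by move: y0; clear; lra.
    by move: y1; clear; lra.
  have hk' : T4 * kap <= T4 * E1 (y + 1) by apply: ler_wpM2l; [exact: ltW|].
  have := KB y y0; have := PF y y0.
  move: hk'; clear; lra.
have h0' : f x @[x --> 0^'+] --> TM by rewrite -hf0.
have hlim : (fun y => c * f1 y + f y ^+ 4 - T4 + 2^-1 * (T4 * kap)) x @[x --> 0^'+]
    --> c * l + T4 - T4 + 2^-1 * (T4 * kap).
  apply: cvgD; last exact: cvg_cst.
  apply: cvgB; last exact: cvg_cst.
  apply: cvgD; first exact: cvgMl_tmp.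
  exact: (cvg_comp _ _ h0' (@exprn_continuous R 4 TM)).
have pos : 0 < c * l + T4 - T4 + 2^-1 * (T4 * kap).
  have := mulr_ge0 (ltW c0) l0; have := mulr_gt0 T40 kap0.
  clear; lra.
have Hn := @cvgr_gt _ _ _ _ _ _ hlim 0 pos.
have Hn2 : \forall t \near 0^'+,
    0 < c * f1 t + f t ^+ 4 - T4 + 2^-1 * (T4 * kap) /\ t < 1.
  near=> t; split.
    by near: t; exact: (Hn _).
  by near: t; exact: (@nbhs_right_lt R 0 1 ltr01).
have [e e0 He] := @near_right0 R _ Hn2.
have f2pos : forall t, 0 < t -> t < e -> 0 < f2 t.
  move=> t t0 te; have [h1 h2] := He t t0 te.
  exact: lt_le_trans h1 (KB2 t t0 h2).
have f1incr : forall a b, 0 < a -> a < b -> b < e -> f1 a < f1 b.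
  move=> a b a0 ab be; apply: push; first exact: ab.
    apply: derivable_within_continuous => s; rewrite in_itv/= => /andP[as_ _].
    by case: (d1 s (lt_le_trans a0 as_)).
  move=> s as_ sb; case: (d1 s (lt_trans a0 as_)) => ds ->; split; first exact: ds.
  apply: f2pos; [exact: lt_trans a0 as_ | exact: lt_trans sb be].
have f1ge : forall t, 0 < t -> t < e -> l <= f1 t.
  move=> t t0 te; apply: limr_le; first exact: hl.
  near=> x.
  have x0 : 0 < x by near: x; exact: nbhs_right_gt.
  have xt : x < t by near: x; exact: nbhs_right_lt.
  exact/ltW/f1incr.
have f1pos : forall t, 0 < t -> t < e -> 0 < f1 t.
  move=> t t0 te.
  have t20 : 0 < t / 2 by rewrite divr_gt0.
  have t2t : t / 2 < t by move: t0; clear; lra.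
  have := f1ge (t / 2) t20 (lt_trans t2t te).
  have := f1incr (t / 2) t t20 t2t te.
  move: l0; clear; lra.
have e20 : 0 < e / 2 by rewrite divr_gt0.
have e2e : e / 2 < e by move: e0; clear; lra.
have : f 0 < f (e / 2).
  apply: push; first exact: e20.
    apply/continuous_within_itvP; first exact: e20.
    split.
    - by move=> s; rewrite in_itv/= => /andP[s0 _]; exact: cf.
    - exact: h0.
    - exact/cvg_at_left_filter/cf.
  move=> s s0 se; split; first exact: d0.
  apply: f1pos; [exact: s0 | exact: lt_trans se e2e].
rewrite hf0; case/andP: (fb (e / 2) (ltW e20)) => _ fT.
move: fT; clear; lra.
Unshelve. all: by end_near.
Qed.
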